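(* The generating series $f(q;x)=\sum_\gamma q^{\omega_{HU}(\gamma)+\omega_{DH}(\gamma)+\omega_{DU}(\gamma)+\omega_{HH}(\gamma)}x^{|\gamma|}$, where $\gamma$ ranges over all Motzkin paths and $|\gamma|$ is the length, is $$f(q;x)=\frac{1-qx-(1-q)x^2-\sqrt{(1+x)\big(1-(1+2q)x-(1-q^2)x^2+(1-q)^2x^3\big)}}{2qx^2}.$$
   Context: Steps: $U=(1,1)$, $D=(1,-1)$, $H=(1,0)$. A Motzkin path of length $n$ is a lattice path from $(0,0)$ to $(n,0)$ with steps $U,D,H$ never going below the $x$-axis. Paths are identified with words of steps, and $\omega_\alpha(\gamma)$ is the number of occurrences of the word $\alpha$ as a factor (contiguous subword, overlapping occurrences counted separately) of $\gamma$. *)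

(* Defs.v *)
From HB Require Import structures.
From mathcomp Require Import all_boot all_order all_algebra.
Set Implicit Arguments. Unset Strict Implicit. Unset Printing Implicit Defensive.
Import Order.TTheory GRing.Theory Num.Theory.

(* Steps U=(1,1), D=(1,-1), H=(1,0). *)
Inductive step := U | D | H.

Definition step_eqb (a b : step) : bool :=
  match a, b with U, U | D, D | H, H => true | _, _ => false end.
Lemma step_eqP : Equality.axiom step_eqb.
Proof. by case; case; constructor. Qed.
HB.instance Definition _ := hasDecEq.Build step step_eqP.

Definition dh (s : step) : int :=
  match s with U => 1%R | D => (-1)%R | H => 0%R end.
Definition height (w : seq step) : int := (\sum_(s <- w) dh s)%R.

Definition motzkin (w : seq step) : bool :=
  all (fun i => (0 <= height (take i w))%R) (iota 0 (size w).+1)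
  && (height w == 0%R).

Fixpoint words (n : nat) : seq (seq step) :=
  match n with
  | 0 => [:: [::]]
  | n'.+1 => flatten [seq [:: U :: w; D :: w; H :: w] | w <- words n']
  end.

(* omega_alpha(gamma): number of (possibly overlapping) occurrences of alpha
   as a factor of gamma *)
Definition occ (alpha gamma : seq step) : nat :=
  count (fun i => take (size alpha) (drop i gamma) == alpha) (iota 0 (size gamma)).

Definition stat (g : seq step) : nat :=
  occ [:: H; U] g + occ [:: D; H] g + occ [:: D; U] g + occ [:: H; H] g.

Local Open Scope ring_scope.

(* Coefficient of x^n in f(q;x), a polynomial in q (q = 'X). *)
Definition motz_coef (n : nat) : {poly rat} :=
  \sum_(w <- words n | motzkin w) 'X^(stat w).

(* Formal power series in x with coefficients in Q[q]. *)
Definition fps := nat -> {poly rat}.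
Definition fps_of (cs : seq {poly rat}) : fps := fun n => nth 0 cs n.
Definition fmul (f g : fps) : fps := fun n => \sum_(i < n.+1) f i * g (n - i)%N.
Definition fsub (f g : fps) : fps := fun n => f n - g n.

(* Square root of a formal power series (with constant term 1): the unique
   series s with s_0 = 1 and s*s = p, computed by
   s_n = (p_n - sum_{i=1}^{n-1} s_i s_{n-i}) / 2. *)
Fixpoint sqrt_seq (p : fps) (n : nat) : seq {poly rat} :=
  match n with
  | 0 => [:: 1]
  | n'.+1 => let s := sqrt_seq p n' in
      rcons s (((2%:R : rat)^-1)%:P *
               (p n - \sum_(1 <= i < n) nth 0 s i * nth 0 s (n - i)%N))
  end.
Definition fsqrt (p : fps) : fps := fun n => nth 0 (sqrt_seq p n) n.

Definition f_series : fps := motz_coef.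
Definition radicand : fps :=
  fmul (fps_of [:: 1; 1])
       (fps_of [:: 1; - (1 + 2%:R * 'X); - (1 - 'X ^+ 2); (1 - 'X) ^+ 2]).
Definition numer_poly : fps := fps_of [:: 1; - 'X; - (1 - 'X)].
Definition denom : fps := fps_of [:: 0; 0; 2%:R * 'X].

(* Main.v *)
Require Import Defs.
From mathcomp Require Import all_boot all_order all_algebra.
From mathcomp Require Import ring zify.
Import Order.TTheory GRing.Theory Num.Theory.
Set Implicit Arguments. Unset Strict Implicit. Unset Printing Implicit Defensive.

Section Comb.


Fixpoint mz (c : nat) (w : seq step) : bool :=
  match w with
  | [::] => c == 0
  | U :: w' => mz c.+1 w'
  | D :: w' => if c is c'.+1 then mz c' w' else false
  | H :: w' => mz c w'
  end.

Definition pw (a : step) (w : seq step) : nat :=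
  match w with [::] => 0 | b :: _ => ((a != U) && (b != D) : nat) end.

Fixpoint sta (w : seq step) : nat :=
  match w with [::] => 0 | a :: w' => pw a w' + sta w' end.

Lemma height_cons s w : height (s :: w) = (dh s + height w)%R.
Proof. by rewrite /height big_cons. Qed.

Lemma height_nil : height [::] = 0%R.
Proof. by rewrite /height big_nil. Qed.

Lemma iota1 n : iota 1 n = map S (iota 0 n).
Proof. by rewrite -[1]addn0 iotaDl. Qed.

Definition Pall (c : int) (w : seq step) :=
  all (fun i => (0 <= (c + height (take i w))))%R (iota 0 (size w).+1).

Lemma Pcons c s w : Pall c (s :: w) = (0 <= c)%R && Pall (c + dh s)%R w.
Proof.
rewrite /Pall (_ : iota 0 (size (s :: w)).+1 = 0 :: map S (iota 0 (size w).+1));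
  last by rewrite -iota1.
have allc : forall (a : pred nat) x t, all a (x :: t) = a x && all a t by [].
rewrite allc all_map; congr (_ && _).
  by rewrite take0 height_nil addr0.
by apply: eq_all => i /=; rewrite height_cons addrA.
Qed.

Lemma mzP_gen (w : seq step) (c : nat) :
  Pall c%:Z w && (c%:Z + height w == 0)%R = mz c w.
Proof.
elim: w c => [|s w IH] c.
  by rewrite /Pall /= height_nil !addr0; case: c.
rewrite Pcons height_cons addrA le0z_nat andTb.
case: s => /=.
- by rewrite -(IH c.+1) -addn1 PoszD.
- case: c => [|c].
    by rewrite /Pall /= take0 height_nil.
  by rewrite -(IH c) -addn1 PoszD addrK.
- by rewrite -(IH c) addr0.
Qed.

Lemma motzkinE w : motzkin w = mz 0 w.
Proof.
rewrite -mzP_gen /motzkin /Pall add0r; congr (_ && _).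
by apply: eq_all => i /=; rewrite add0r.
Qed.

Lemma occ_cons p a w : occ p (a :: w) = (take (size p) (a :: w) == p) + occ p w.
Proof.
rewrite /occ [size _]/= (_ : iota 0 (size w).+1 = 0 :: map S (iota 0 (size w)));
  last by rewrite -iota1.
by rewrite /= count_map.
Qed.

Lemma occ_nil p : occ p [::] = 0.
Proof. by []. Qed.

Lemma statE w : stat w = sta w.
Proof.
elim: w => [|a w IH] //=.
rewrite -IH /stat !occ_cons.
case: w {IH} => [|b w]; first by case: a.
by case: a; case: b => /=; rewrite ?take0 /=; lia.
Qed.

Lemma mem_words n w : (w \in words n) = (size w == n).
Proof.
elim: n w => [|n IH] w.
  by case: w.
apply/flatten_mapP/idP.
  by case=> v; rewrite IH => /eqP <-; rewrite !inE => /or3P [] /eqP ->.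
case: w => [|s w] //= Hs; exists w; first by rewrite IH.
by case: s; rewrite !inE eqxx ?orbT.
Qed.

Lemma uniq_words n : uniq (words n).
Proof.
elim: n => [|n IH] //=.
elim: (words n) IH => [|v s IHs] //= /andP [vs us].
have Nf : forall t, t :: v \notin flatten [seq [:: U :: w; D :: w; H :: w] | w <- s].
  move=> t; apply/negP => /flatten_mapP [y ys]; rewrite !inE.
  by move=> /or3P [] /eqP [_ Hy]; move: vs; rewrite Hy ys.
by rewrite !inE !Nf IHs.
Qed.

Local Open Scope ring_scope.

Lemma sum_words_succ (R : nmodType) n (P : pred (seq step)) (G : seq step -> R) :
  \sum_(w <- words n.+1 | P w) G w =
  \sum_(w <- words n) ((if P (U :: w) then G (U :: w) else 0) +
                      (if P (D :: w) then G (D :: w) else 0) +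
                      (if P (H :: w) then G (H :: w) else 0)).
Proof.
rewrite /= big_flatten big_map; apply: eq_bigr => w _.
rewrite !big_cons big_nil /=.
by case: (P (U :: w)); case: (P (D :: w)); case: (P (H :: w)); rewrite ?addr0 ?add0r ?addrA.
Qed.

Fixpoint fr (k : nat) (w : seq step) : seq step * seq step :=
  match w with
  | [::] => ([::], [::])
  | U :: w' => let p := fr k.+1 w' in (U :: p.1, p.2)
  | H :: w' => let p := fr k w' in (H :: p.1, p.2)
  | D :: w' => if k is k'.+1 then let p := fr k' w' in (D :: p.1, p.2)
               else ([::], w')
  end.

Lemma fr_split c w k : mz (k + c.+1) w ->
  [/\ w = (fr k w).1 ++ D :: (fr k w).2, mz k (fr k w).1 & mz c (fr k w).2].
Proof.
elim: w k => [|s w IH] k /=; first by rewrite addnS.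
case: s => /=.
- by move=> /(IH k.+1) [E1 E2 E3]; rewrite -E1.
- case: k => [|k] /=; first by [].
  by move=> /(IH k) [E1 E2 E3]; rewrite -E1.
- by move=> /(IH k) [E1 E2 E3]; rewrite -E1.
Qed.

Lemma fr_cat k a b : mz k a -> fr k (a ++ D :: b) = (a, b).
Proof.
elim: a k => [|s a IH] k /=; first by move/eqP ->.
case: s => /=.
- by move=> /IH ->.
- by case: k => [|k] // /IH ->.
- by move=> /IH ->.
Qed.

Lemma mz_cat k c a b : mz k a -> mz c b -> mz (k + c.+1) (a ++ D :: b).
Proof.
elim: a k => [|s a IH] k /=; first by move/eqP -> => /=.
case: s => /=.
- by move=> /IH H1 /H1; rewrite addSn.
- by case: k => [|k] // /IH H1 /H1.
- by move=> /IH.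
Qed.

Lemma sta_cat a b : sta (a ++ D :: b) = (sta a + sta (D :: b))%N.
Proof.
elim: a => [|s a IH] //=.
rewrite IH addnA; congr (_ + _)%N.
by case: a {IH} => [|? ?] /=; rewrite ?andbF.
Qed.

Lemma sum_mz1_fixed (R : nmodType) n (i : 'I_n.+1) (G : seq step -> R) :
  \sum_(w <- words n.+1 | mz 1 w && (size (fr 0 w).1 == i)) G w =
  \sum_(a <- words i | mz 0 a) \sum_(b <- words (n - i) | mz 0 b) G (a ++ D :: b).
Proof.
rewrite -big_filter.
have -> : \sum_(a <- words i | mz 0 a) \sum_(b <- words (n - i) | mz 0 b) G (a ++ D :: b)
  = \sum_(w <- [seq a ++ D :: b | a <- [seq a <- words i | mz 0 a],
                                 b <- [seq b <- words (n - i) | mz 0 b]]) G w.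
  by rewrite big_allpairs_dep big_filter; apply: eq_bigr => a _; rewrite big_filter.
apply: perm_big; apply: uniq_perm.
- exact/filter_uniq/uniq_words.
- apply: allpairs_uniq; try exact/filter_uniq/uniq_words.
  move=> [a b] [a' b'] /allpairsP [[x y] [/= xA _ [-> ->]]]
    /allpairsP [[x' y'] [/= xA' _ [-> ->]]] /= E.
  move: xA xA'; rewrite !mem_filter => /andP [m0 _] /andP [m0' _].
  by rewrite -(fr_cat _ m0) -(fr_cat _ m0') E.
move=> w; apply/idP/idP.
  rewrite mem_filter mem_words => /andP [/andP [m1 /eqP si] /eqP sw].
  have [E1 E2 E3] := fr_split (k := 0) (c := 0) m1.
  apply/allpairsP; exists (fr 0 w); split => //.
    by rewrite mem_filter E2 mem_words si eqxx.
  rewrite mem_filter E3 mem_words /=; apply/eqP.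
  move: sw; rewrite {1}E1 size_cat /= si; lia.
move=> /allpairsP [[a b] [/=]]; rewrite !mem_filter !mem_words.
move=> /andP [ma /eqP sa] /andP [mb /eqP sb] ->.
rewrite fr_cat // sa eqxx andbT (mz_cat (k := 0)) //=.
rewrite -[flatten _]/(words n.+1) mem_words size_cat /= sa sb.
have := ltn_ord i; apply/implyP; apply/implyP; lia.
Qed.

Lemma sum_mz1 (R : nmodType) n (G : seq step -> R) :
  \sum_(w <- words n.+1 | mz 1 w) G w =
  \sum_(i < n.+1) \sum_(a <- words i | mz 0 a)
      \sum_(b <- words (n - i) | mz 0 b) G (a ++ D :: b).
Proof.
rewrite -(eq_bigr _ (fun i _ => sum_mz1_fixed i G)).
rewrite (eq_bigr (fun i : 'I_n.+1 => \sum_(w <- words n.+1 | mz 1 w)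
           (if size (fr 0 w).1 == i then G w else 0)));
  last by move=> i _; rewrite big_mkcondr.
rewrite exchange_big /= big_seq_cond [RHS]big_seq_cond.
apply: eq_bigr => w /andP [wW m1].
have [E1 E2 E3] := fr_split (k := 0) (c := 0) m1.
have lt : (size (fr 0 w).1 < n.+1)%N.
  by move: wW; rewrite -[flatten _]/(words n.+1) mem_words {1}E1 size_cat /= => /eqP; lia.
rewrite -big_mkcond /= (big_pred1 (Ordinal lt)) //.
Qed.

Lemma motz_coefE n : motz_coef n = \sum_(w <- words n | mz 0 w) 'X^(sta w).
Proof.
by apply: eq_big => [w|w _]; rewrite ?motzkinE ?statE.
Qed.

Definition hc m : {poly rat} := \sum_(b <- words m | mz 0 b) 'X^(pw D b + sta b).

Lemma f0 : motz_coef 0 = 1.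
Proof. by rewrite motz_coefE /= big_cons big_nil /= addr0 expr0. Qed.

Lemma hcE m : hc m = if m == 0%N then 1 else 'X * motz_coef m.
Proof.
case: m => [|m]; first by rewrite /hc /= big_cons big_nil /= addr0 expr0.
rewrite /= motz_coefE mulr_sumr /hc big_seq_cond [RHS]big_seq_cond.
apply: eq_bigr => w /andP [].
rewrite mem_words; case: w => [|s w] //= _.
by case: s => //= _; rewrite add1n exprS.
Qed.

Lemma motz_rec n : motz_coef n.+1 =
  hc n + (if n is m.+1 then \sum_(i < m.+1) motz_coef i * hc (m - i) else 0).
Proof.
rewrite motz_coefE sum_words_succ /= big_split /= addrC.
congr (_ + _).
  rewrite /hc [RHS]big_mkcond /=; apply: eq_bigr => w _.
  by case: (mz 0 w) => //; case: w => [|[] ?].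
rewrite (eq_bigr (fun w => if mz 1 w then 'X^(sta w) else 0)); last first.
  move=> w _; rewrite addr0; case: (mz 1 w) => //.
  by case: w => [|s w] //=; rewrite add0n.
rewrite -big_mkcond.
rewrite -[X in X = _]/(\sum_(i <- words n | mz 1 i) ('X^(sta i) : {poly rat})).
case: n => [|m]; first by rewrite /= big_cons big_nil /=.
rewrite sum_mz1; apply: eq_bigr => i _.
rewrite motz_coefE /hc big_distrl /=; apply: eq_bigr => a _.
rewrite big_distrr /=; apply: eq_bigr => b _.
by rewrite sta_cat /= exprD.
Qed.

End Comb.

Local Open Scope ring_scope.

Lemma sqrt_seq_size p n : size (sqrt_seq p n) = n.+1.
Proof. by elim: n => [|n IH] //=; rewrite size_rcons IH. Qed.

Lemma sqrt_seq_nth p n i : (i <= n)%N -> nth 0 (sqrt_seq p n) i = fsqrt p i.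
Proof.
elim: n i => [|n IH] i.
  by rewrite leqn0 => /eqP ->.
rewrite leq_eqVlt => /orP [/eqP -> //|lt].
by rewrite /= nth_rcons sqrt_seq_size lt IH.
Qed.

Lemma fsqrtS p n : fsqrt p n.+1 = (2%:R^-1)%:P *
  (p n.+1 - \sum_(1 <= i < n.+1) fsqrt p i * fsqrt p (n.+1 - i)%N).
Proof.
rewrite {1}/fsqrt /= nth_rcons sqrt_seq_size ltnn eqxx.
congr (_ * (_ - _)); apply: eq_big_nat => i /andP [i1 i2].
by rewrite !sqrt_seq_nth //; lia.
Qed.

Lemma fsqrt_unique p (S : fps) : S 0%N = 1 -> (forall n, fmul S S n = p n) ->
  forall n, S n = fsqrt p n.
Proof.
move=> S0 HS n.
suff : forall m, (m <= n)%N -> S m = fsqrt p m by apply.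
elim: n => [|n IH] m.
  by rewrite leqn0 => /eqP ->.
rewrite leq_eqVlt => /orP [/eqP ->|]; last by rewrite ltnS; apply: IH.
rewrite fsqrtS -(HS n.+1) /fmul big_ord_recl big_ord_recr /= subn0 subnn S0.
rewrite mul1r mulr1 big_add1 /= big_mkord.
rewrite (eq_bigr (fun i : 'I_n => S (bump 0 i) * S (n.+1 - bump 0 (widen_ord (leqnSn n) i))%N)); last first.
  by move=> i _.
set M1 := \sum_(i < n) _.
set M2 := \sum_(i < n) _.
have -> : M1 = M2.
  rewrite /M1 /M2; apply: eq_bigr => i _.
  rewrite /bump /= add1n subSS !IH //; first by apply: leq_subr.
have -> : bump 0 n = n.+1 by rewrite /bump add1n.
have -> : S n.+1 + (M2 + S n.+1) - M2 = (1 + 1) * S n.+1 by ring.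
rewrite mulrA.
have -> : (2%:R^-1)%:P * (1 + 1) = 1 :> {poly rat}.
  by rewrite -polyC1 -polyCD -polyCM; congr polyC; field.
by rewrite mul1r.
Qed.

Local Open Scope ring_scope.

Lemma fmul_coef (A B : fps) (p q : {poly {poly rat}}) n :
  (forall i, (i <= n)%N -> A i = p`_i) -> (forall i, (i <= n)%N -> B i = q`_i) ->
  fmul A B n = (p * q)`_n.
Proof.
move=> HA HB; rewrite coefM /fmul; apply: eq_bigr => i _.
rewrite HA ?HB //; first exact: leq_subr.
by rewrite -ltnS.
Qed.

Lemma fps_ofE cs i : fps_of cs i = (Poly cs)`_i.
Proof. by rewrite coef_Poly. Qed.

Definition Fp n : {poly {poly rat}} := \poly_(i < n.+1) motz_coef i.
Definition Hp n : {poly {poly rat}} := (1 - 'X)%:P + ('X)%:P * Fp n.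

Lemma Fp_coef n i : (i <= n)%N -> (Fp n)`_i = motz_coef i.
Proof. by move=> le; rewrite coef_poly ltnS le. Qed.

Lemma Hp_coef n j : (j <= n)%N -> (Hp n)`_j = hc j.
Proof.
move=> le; rewrite coefD coefC coefCM Fp_coef // hcE.
case: j le => [|j] _ /=; last by rewrite add0r.
by rewrite f0 mulr1 subrK.
Qed.

Lemma FHp_coef n m : (m <= n)%N ->
  (Fp n * Hp n)`_m = \sum_(i < m.+1) motz_coef i * hc (m - i).
Proof.
move=> le; rewrite coefM; apply: eq_bigr => i _.
rewrite Fp_coef ?Hp_coef //; first by apply: leq_trans (leq_subr _ _) le.
by apply: leq_trans le; rewrite -ltnS.
Qed.

Definition Ep n : {poly {poly rat}} :=
  1 + 'X * Hp n + 'X * ('X * (Fp n * Hp n)) - Fp n.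

Lemma Ep_coef n k : (k <= n)%N -> (Ep n)`_k = 0.
Proof.
move=> le; rewrite /Ep coefB !coefD coef1 !coefXM Fp_coef //.
case: k le => [|k] le /=.
  by rewrite f0 !addr0 subrr.
rewrite Hp_coef; last by apply: ltnW.
rewrite motz_rec add0r; case: k le => [|m] le /=.
  by rewrite subrr.
by rewrite FHp_coef ?subrr //; apply: leq_trans le; apply: leq_trans (leqnSn _) _.
Qed.

Definition Ncs : seq {poly rat} := [:: 1; - 'X; - (1 - 'X)].
Definition Dcs : seq {poly rat} := [:: 0; 0; 2%:R * 'X].
Definition R1cs : seq {poly rat} := [:: 1; 1].
Definition R2cs : seq {poly rat} := [:: 1; - (1 + 2%:R * 'X); - (1 - 'X ^+ 2); (1 - 'X) ^+ 2].

Definition Sp n : {poly {poly rat}} := Poly Ncs - Poly Dcs * Fp n.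

Lemma Sp_id n : Sp n * Sp n =
  Poly R1cs * Poly R2cs + (4%:R * 'X)%:P * ('X^2 * Ep n).
Proof.
rewrite /Sp /Ep /Hp /Ncs /Dcs /R1cs /R2cs /= !cons_poly_def.
set F := Fp n.
ring.
Qed.

Theorem mainTheorem7 :
  forall n : nat,
    fmul denom f_series n = fsub numer_poly (fsqrt radicand) n.
Proof.
move=> n.
pose S : fps := fun k => numer_poly k - fmul denom f_series k.
have S0 : S 0%N = 1.
  by rewrite /S /fmul big_ord1 /= mul0r subr0.
have HS : forall m, fmul S S m = radicand m.
  move=> m.
  have HSm : forall i, (i <= m)%N -> S i = (Sp m)`_i.
    move=> i le; rewrite /S /Sp coefB coef_Poly.
    congr (_ - _); apply: fmul_coef => j lej.
      by rewrite coef_Poly.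
    by rewrite Fp_coef //; apply: leq_trans le.
  rewrite (fmul_coef HSm HSm) Sp_id coefD coefCM coefXnM.
  rewrite /radicand (fmul_coef (p := Poly R1cs) (q := Poly R2cs)); last 2 first.
  - by move=> i _; rewrite coef_Poly.
  - by move=> i _; rewrite coef_Poly.
  case: ltnP => _; first by rewrite mulr0 addr0.
  by rewrite Ep_coef ?mulr0 ?addr0 // leq_subr.
rewrite /fsub -(fsqrt_unique S0 HS n) /S.
ring.
Qed.
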